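(* Under the setup in the context (no assumption that $\hat\beta_{ols}\neq\hat\beta_{2sls}$), one has $\hat\sigma_{2sls}^2\ge\hat\sigma_{ols}^2\ge\hat\sigma_u^2$ and $t_{CF}\ge t_{H_1}\ge t_{H_2}\ge t_{H_3}$.
   Context: Data: $Y_1$ is an $n\times k_1$ matrix, $Y_2$ an $n\times 1$ vector, $Z_1$ an $n\times p_1$ matrix, $Z_2$ an $n\times p_2$ matrix, all real; $Z\equiv(Z_1,Z_2)$ and $X\equiv(Y_1,Z_1)$. For a matrix $A$ with $A^\top A$ nonsingular, $P_A\equiv A(A^\top A)^{-1}A^\top$ and $M_A\equiv I_n-P_A$. Standing assumptions: $Z^\top Z$, $X^\top X$, $X^\top P_Z X$ and $(X,\hat V)^\top(X,\hat V)$ are nonsingular, where $\hat V\equiv M_Z Y_1$. Define $\hat Y_1\equiv P_Z Y_1$, $\hat\theta_{ols}\equiv(X^\top X)^{-1}X^\top Y_2$, $\hat\theta_{2sls}\equiv(X^\top P_ZX)^{-1}X^\top P_Z Y_2$, and let $\hat\beta_{ols},\hat\beta_{2sls}$ be the leading $k_1\times1$ subvectors of $\hat\theta_{ols},\hat\theta_{2sls}$. Define $(\hat\theta_{cf}^\top,\hat\rho_{cf}^\top)^\top\equiv((X,\hat V)^\top(X,\hat V))^{-1}(X,\hat V)^\top Y_2$, $\hat\sigma_u^2\equiv n^{-1}\|Y_2-X\hat\theta_{cf}-\hat V\hat\rho_{cf}\|^2$, $\hat\sigma_{ols}^2\equiv n^{-1}\|Y_2-X\hat\theta_{ols}\|^2$,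 $\hat\sigma_{2sls}^2\equiv n^{-1}\|Y_2-X\hat\theta_{2sls}\|^2$; these three are assumed strictly positive. For scalars $s_1^2,s_2^2>0$ with $s_1^2(\hat Y_1^\top M_{Z_1}\hat Y_1)^{-1}-s_2^2(Y_1^\top M_{Z_1}Y_1)^{-1}$ nonsingular, $t_{H,n}(s_1^2,s_2^2)\equiv(\hat\beta_{ols}-\hat\beta_{2sls})^\top\big(s_1^2(\hat Y_1^\top M_{Z_1}\hat Y_1)^{-1}-s_2^2(Y_1^\top M_{Z_1}Y_1)^{-1}\big)^{-1}(\hat\beta_{ols}-\hat\beta_{2sls})$. Define $t_{H_1}\equiv t_{H,n}(\hat\sigma_{ols}^2,\hat\sigma_{ols}^2)$, $t_{H_2}\equiv t_{H,n}(\hat\sigma_{2sls}^2,\hat\sigma_{2sls}^2)$, $t_{H_3}\equiv t_{H,n}(\hat\sigma_{2sls}^2,\hat\sigma_{ols}^2)$, and the Wald statistic $t_{CF}\equiv\hat\rho_{cf}^\top\big(\hat\sigma_u^2(\hat V^\top M_X\hat V)^{-1}\big)^{-1}\hat\rho_{cf}$. *)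

(* Defs.v *)
From HB Require Import structures.
From mathcomp Require Import all_boot all_order all_algebra.
Set Implicit Arguments. Unset Strict Implicit. Unset Printing Implicit Defensive.
Import Order.TTheory GRing.Theory Num.Theory.
Local Open Scope ring_scope.

Section Defs.
Variable R : realFieldType.

Definition projmx n m (A : 'M[R]_(n, m)) : 'M[R]_n :=
  A *m invmx (A^T *m A) *m A^T.
Definition annmx n m (A : 'M[R]_(n, m)) : 'M[R]_n := 1%:M - projmx A.

Definition gram_unit n m (A : 'M[R]_(n, m)) : bool := (A^T *m A) \in unitmx.

Definition sqnorm n (v : 'cV[R]_n) : R := (v^T *m v) 0 0.

Definition qform k (v : 'cV[R]_k) (A : 'M[R]_k) : R := (v^T *m A *m v) 0 0.

Variables (n k1 p1 p2 : nat).
Variables (Y1 : 'M[R]_(n, k1)) (Y2 : 'cV[R]_n)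
          (Z1 : 'M[R]_(n, p1)) (Z2 : 'M[R]_(n, p2)).

Definition Zmat : 'M[R]_(n, p1 + p2) := row_mx Z1 Z2.
Definition Xmat : 'M[R]_(n, k1 + p1) := row_mx Y1 Z1.
Definition Vhat : 'M[R]_(n, k1) := annmx Zmat *m Y1.
Definition Y1hat : 'M[R]_(n, k1) := projmx Zmat *m Y1.
Definition XV : 'M[R]_(n, (k1 + p1) + k1) := row_mx Xmat Vhat.

Definition theta_ols : 'cV[R]_(k1 + p1) :=
  invmx (Xmat^T *m Xmat) *m Xmat^T *m Y2.
Definition theta_2sls : 'cV[R]_(k1 + p1) :=
  invmx (Xmat^T *m projmx Zmat *m Xmat) *m Xmat^T *m projmx Zmat *m Y2.
Definition beta_ols : 'cV[R]_k1 := usubmx theta_ols.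
Definition beta_2sls : 'cV[R]_k1 := usubmx theta_2sls.

Definition coef_cf : 'cV[R]_((k1 + p1) + k1) := invmx (XV^T *m XV) *m XV^T *m Y2.
Definition theta_cf : 'cV[R]_(k1 + p1) := usubmx coef_cf.
Definition rho_cf : 'cV[R]_k1 := dsubmx coef_cf.

Definition sigma2_u : R :=
  (n%:R)^-1 * sqnorm (Y2 - Xmat *m theta_cf - Vhat *m rho_cf).
Definition sigma2_ols : R := (n%:R)^-1 * sqnorm (Y2 - Xmat *m theta_ols).
Definition sigma2_2sls : R := (n%:R)^-1 * sqnorm (Y2 - Xmat *m theta_2sls).

Definition Hmid (s1 s2 : R) : 'M[R]_k1 :=
  s1 *: invmx (Y1hat^T *m annmx Z1 *m Y1hat) - s2 *: invmx (Y1^T *m annmx Z1 *m Y1).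

Definition tH (s1 s2 : R) : R := qform (beta_ols - beta_2sls) (invmx (Hmid s1 s2)).

Definition tH1 : R := tH sigma2_ols sigma2_ols.
Definition tH2 : R := tH sigma2_2sls sigma2_2sls.
Definition tH3 : R := tH sigma2_2sls sigma2_ols.

Definition tCF : R :=
  qform rho_cf (invmx (sigma2_u *: invmx (Vhat^T *m annmx Xmat *m Vhat))).

End Defs.

(* Main.v *)
Require Import Defs.
From mathcomp Require Import all_boot all_order all_algebra.
From mathcomp Require Import lra.
Import Order.TTheory GRing.Theory Num.Theory.
Set Implicit Arguments. Unset Strict Implicit. Unset Printing Implicit Defensive.
Local Open Scope ring_scope.


Section Gen.
Variable R : realFieldType.

Lemma sq_ge0 m (x : 'cV[R]_m) : 0 <= (x^T *m x) 0 0.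
Proof.
rewrite mxE; apply: sumr_ge0 => i _; rewrite mxE -expr2; exact: sqr_ge0.
Qed.

Lemma sq_eq0 m (x : 'cV[R]_m) : (x^T *m x) 0 0 = 0 -> x = 0.
Proof.
rewrite mxE => h; apply/matrixP => i j; rewrite (ord1 j) mxE.
have h0 : forall l : 'I_m, true -> 0 <= x^T 0 l * x l 0.
  by move=> l _; rewrite mxE -expr2; exact: sqr_ge0.
have := @psumr_eq0P _ _ xpredT (fun l => x^T 0 l * x l 0) h0 h i isT.
by rewrite mxE -expr2 => /eqP; rewrite sqrf_eq0 => /eqP.
Qed.

Lemma ker_unit k (M : 'M[R]_k) :
  (forall v : 'cV[R]_k, M *m v = 0 -> v = 0) -> M \in unitmx.
Proof.
move=> h; rewrite -unitmx_tr -row_free_unit -kermx_eq0.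
have hK := mulmx_ker M^T.
have e : M *m (kermx M^T)^T = 0.
  by have := congr1 trmx hK; rewrite trmx_mul trmxK trmx0.
apply/eqP; apply/matrixP => i j; rewrite mxE.
have := h (col i (kermx M^T)^T).
rewrite colE mulmxA e mul0mx => /(_ erefl) /matrixP /(_ j 0).
by rewrite -colE !mxE.
Qed.

Lemma gram_ker n m (A : 'M[R]_(n, m)) (v : 'cV_m) :
  gram_unit A -> A *m v = 0 -> v = 0.
Proof.
rewrite /gram_unit => hu hv.
by rewrite -(mulKmx hu v) -mulmxA hv mulmx0 mulmx0.
Qed.

Lemma gram_ker2 n m (A : 'M[R]_(n, m)) (v : 'cV_m) :
  A^T *m A *m v = 0 -> A *m v = 0.
Proof.
move=> h; apply: sq_eq0.
by rewrite trmx_mul -mulmxA (mulmxA A^T) h mulmx0 mxE.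
Qed.

Lemma tr_sym_quad m k (M : 'M[R]_m) (x : 'M[R]_(m,k)) :
  (x^T *m M *m x)^T = x^T *m M^T *m x.
Proof. by rewrite !trmx_mul trmxK mulmxA. Qed.

Section Proj.
Variables (n m : nat) (A : 'M[R]_(n, m)).
Hypothesis hA : gram_unit A.

Lemma projmx_tr : (projmx A)^T = projmx A.
Proof. by rewrite /projmx !trmx_mul trmxK trmx_inv trmx_mul trmxK mulmxA. Qed.

Lemma projmx_A : projmx A *m A = A.
Proof. by rewrite /projmx -!mulmxA (mulVmx hA) mulmx1. Qed.

Lemma trA_projmx : A^T *m projmx A = A^T.
Proof. by rewrite -projmx_tr -trmx_mul projmx_A. Qed.

Lemma projmx_idem : projmx A *m projmx A = projmx A.
Proof. by rewrite {1}/projmx -!mulmxA trA_projmx mulmxA. Qed.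

Lemma annmx_tr : (annmx A)^T = annmx A.
Proof. by rewrite /annmx linearB /= trmx1 projmx_tr. Qed.

Lemma annmx_A : annmx A *m A = 0.
Proof. by rewrite /annmx mulmxBl mul1mx projmx_A subrr. Qed.

Lemma annmx_idem : annmx A *m annmx A = annmx A.
Proof.
by rewrite {1}/annmx mulmxBl mul1mx {1}/annmx mulmxBr mulmx1 projmx_idem subrr subr0.
Qed.

Lemma annmx_orth k (v : 'M[R]_(n,k)) : A^T *m v = 0 -> annmx A *m v = v.
Proof.
by move=> h; rewrite /annmx mulmxBl mul1mx /projmx -!mulmxA h !mulmx0 subr0.
Qed.

Lemma annmx_quad k (v : 'M[R]_(n,k)) :
  v^T *m annmx A *m v = (annmx A *m v)^T *m (annmx A *m v).
Proof.
by rewrite trmx_mul annmx_tr -!mulmxA (mulmxA (annmx A)) annmx_idem.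
Qed.

End Proj.
End Gen.



Section Gen2.
Variable R : realFieldType.

Lemma tr11 m (u v : 'cV[R]_m) : (u^T *m v) 0 0 = (v^T *m u) 0 0.
Proof. by rewrite -[in RHS](trmxK u) -trmx_mul [RHS]mxE. Qed.

Lemma trB m n (u v : 'M[R]_(m,n)) : (u - v)^T = u^T - v^T.
Proof. by apply/matrixP => i j; rewrite !mxE. Qed.
Lemma trD m n (u v : 'M[R]_(m,n)) : (u + v)^T = u^T + v^T.
Proof. by apply/matrixP => i j; rewrite !mxE. Qed.
Lemma trZ m n a (u : 'M[R]_(m,n)) : (a *: u)^T = a *: u^T.
Proof. by apply/matrixP => i j; rewrite !mxE. Qed.

Lemma entD m n (u v : 'M[R]_(m,n)) i j : (u + v) i j = u i j + v i j.
Proof. by rewrite mxE. Qed.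
Lemma entB m n (u v : 'M[R]_(m,n)) i j : (u - v) i j = u i j - v i j.
Proof. by rewrite !mxE. Qed.
Lemma entN m n (u : 'M[R]_(m,n)) i j : (- u) i j = - u i j.
Proof. by rewrite !mxE. Qed.
Lemma entZ m n a (u : 'M[R]_(m,n)) i j : (a *: u) i j = a * u i j.
Proof. by rewrite !mxE. Qed.

Lemma inv_anti k (M N P : 'M[R]_k) (d : 'cV[R]_k) :
  M^T = M -> N^T = N -> M \in unitmx -> N \in unitmx -> N = M + P ->
  (forall x : 'cV_k, 0 <= (x^T *m P *m x) 0 0) ->
  (forall x : 'cV_k, 0 <= (x^T *m M *m x) 0 0) ->
  (d^T *m invmx N *m d) 0 0 <= (d^T *m invmx M *m d) 0 0.
Proof.
move=> sM sN uM uN eN hP hM.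
set x := invmx N *m d; set y := invmx M *m d.
have Nx : N *m x = d by rewrite /x mulmxA mulmxV // mul1mx.
have My : M *m y = d by rewrite /y mulmxA mulmxV // mul1mx.
rewrite -!mulmxA -/x -/y.
have h1 := hM (x - y).
have e1 : (x - y)^T *m M *m (x - y) =
   x^T *m M *m x - x^T *m (M *m y) - (M^T *m y)^T *m x + y^T *m (M *m y).
  rewrite trB !mulmxBl !mulmxBr [(M^T *m y)^T]trmx_mul trmxK.
  by rewrite !mulmxA opprD opprK addrA.
rewrite e1 sM My in h1.
have e2 : (d^T *m x) = x^T *m M *m x + x^T *m P *m x.
  by rewrite -{1}Nx [(N *m x)^T]trmx_mul sN eN mulmxDr mulmxDl !mulmxA.
have := hP x.
move: h1; rewrite ?(entB, entD, entN) (tr11 x d) (tr11 y d).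
move/(congr1 (fun A : 'M[R]_1 => A 0 0)): e2; rewrite entD.
lra.
Qed.
End Gen2.

Section Gen3.
Variable R : realFieldType.
Lemma inv_sym k (M : 'M[R]_k) : M^T = M -> (invmx M)^T = invmx M.
Proof. by move=> s; rewrite trmx_inv s. Qed.

Lemma inv_psd k (M : 'M[R]_k) : M^T = M -> M \in unitmx ->
  (forall x : 'cV_k, 0 <= (x^T *m M *m x) 0 0) ->
  forall x : 'cV_k, 0 <= (x^T *m invmx M *m x) 0 0.
Proof.
move=> s u h x; have := h (invmx M *m x).
rewrite trmx_mul inv_sym // -!mulmxA (mulmxA M) (mulmxV u) mul1mx.
by rewrite mulmxA.
Qed.

Lemma min_res n m (X : 'M[R]_(n,m)) (r : 'cV_n) (t : 'cV_m) :
  X^T *m r = 0 -> sqnorm r <= sqnorm (r + X *m t).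
Proof.
move=> h; rewrite /sqnorm trD !mulmxDl !mulmxDr.
have h1 : r^T *m X = 0 by rewrite -(trmxK (r^T *m X)) trmx_mul trmxK h trmx0.
rewrite [r^T *m (X *m t)]mulmxA h1 mul0mx.
rewrite [(X *m t)^T]trmx_mul -[t^T *m X^T *m r]mulmxA h mulmx0 add0r addr0 entD.
by rewrite lerDl -trmx_mul sq_ge0.
Qed.
End Gen3.



Lemma A_eq_gen (R : realFieldType) n k (P Wm Q : 'M[R]_n) (Y : 'M[R]_(n,k)) :
  P^T = P -> P *m Wm = Q -> Q *m P = Q -> (P *m Y)^T *m Wm *m (P *m Y) = Y^T *m Q *m Y.
Proof.
move=> sP h1 h2; rewrite trmx_mul sP !mulmxA -(mulmxA _ P Wm) h1.
by rewrite -(mulmxA _ Q P) h2.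
Qed.

Lemma psd_gram (R : realFieldType) k m (U : 'M[R]_(k,m)) (x : 'cV[R]_m) :
  0 <= (x^T *m (U^T *m U) *m x) 0 0.
Proof. by rewrite !mulmxA -trmx_mul -mulmxA sq_ge0. Qed.

Lemma ols_normal (R : realFieldType) n m (X : 'M[R]_(n,m)) (y : 'cV[R]_n) :
  gram_unit X -> X^T *m (y - X *m (invmx (X^T *m X) *m X^T *m y)) = 0.
Proof.
move=> h; rewrite mulmxBr !mulmxA.
by rewrite (mulmxV h) mul1mx subrr.
Qed.

Lemma iv_normal (R : realFieldType) n m (X : 'M[R]_(n,m)) (P : 'M[R]_n) (y : 'cV[R]_n) :
  X^T *m P *m X \in unitmx ->
  X^T *m P *m (y - X *m (invmx (X^T *m P *m X) *m X^T *m P *m y)) = 0.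
Proof.
move=> h; rewrite mulmxBr !mulmxA.
by rewrite (mulmxV h) mul1mx subrr.
Qed.

Lemma XT_col (R : realFieldType) n a b (Y : 'M[R]_(n,a)) (Zm : 'M[R]_(n,b)) c (v : 'M[R]_(n,c)) :
  (row_mx Y Zm)^T *m v = col_mx (Y^T *m v) (Zm^T *m v).
Proof. by rewrite tr_row_mx mul_col_mx. Qed.

Lemma col0 (R : realFieldType) a b c (u : 'M[R]_(a,c)) (v : 'M[R]_(b,c)) :
  col_mx u v = 0 -> u = 0 /\ v = 0.
Proof. by rewrite -col_mx0 => /eq_col_mx. Qed.

Lemma row_th (R : realFieldType) n a b (Y : 'M[R]_(n,a)) (Zm : 'M[R]_(n,b)) (th : 'cV[R]_(a + b)) :
  row_mx Y Zm *m th = Y *m usubmx th + Zm *m dsubmx th.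
Proof. by rewrite -{1}(vsubmxK th) mul_row_col. Qed.

Lemma fwl (R : realFieldType) n a b (Y : 'M[R]_(n,a)) (Zm : 'M[R]_(n,b)) (Wm : 'M[R]_n)
  (y : 'cV[R]_n) bb g :
  Wm *m Zm = 0 -> Y^T *m Wm *m (y - (Y *m bb + Zm *m g)) = 0 ->
  Y^T *m Wm *m Y *m bb = Y^T *m Wm *m y.
Proof.
move=> h0; rewrite mulmxBr mulmxDr (mulmxA (Y^T *m Wm) Zm) -(mulmxA Y^T Wm Zm) h0.
rewrite mulmx0 mul0mx addr0 mulmxA => /eqP; rewrite subr_eq0 => /eqP.
by move->.
Qed.

Lemma assoc5 (R : realFieldType) n k m (r : 'cV[R]_k) (V : 'M[R]_(n,k)) (X : 'M[R]_(n,m)) (Mi : 'M[R]_m) :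
  r^T *m (V^T *m (X *m Mi *m X^T) *m V) *m r = (X^T *m (V *m r))^T *m (Mi *m (X^T *m (V *m r))).
Proof. by rewrite !trmx_mul trmxK !mulmxA. Qed.

Lemma quad_ann (R : realFieldType) n p (Am : 'M[R]_(n,p)) m (u : 'M[R]_(n, m)) (x : 'cV_m) :
  gram_unit Am ->
  x^T *m (u^T *m annmx Am *m u) *m x = (annmx Am *m (u *m x))^T *m (annmx Am *m (u *m x)).
Proof. by move=> h; rewrite -(annmx_quad h) trmx_mul !mulmxA. Qed.

Lemma ann0 (R : realFieldType) n p (Am : 'M[R]_(n,p)) m (u : 'M[R]_(n, m)) :
  annmx Am *m u = 0 -> u = Am *m (invmx (Am^T *m Am) *m Am^T *m u).
Proof.
rewrite /annmx mulmxBl mul1mx => /eqP; rewrite subr_eq0 => /eqP {1}->.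
by rewrite /projmx !mulmxA.
Qed.

Section Main.
Variables (R : realFieldType) (n k1 p1 p2 : nat).
Variables (Y1 : 'M[R]_(n, k1)) (y : 'cV[R]_n) (Z1 : 'M[R]_(n, p1)) (Z2 : 'M[R]_(n, p2)).
Hypothesis hZ : gram_unit (Zmat Z1 Z2).
Hypothesis hX : gram_unit (Xmat Y1 Z1).
Hypothesis hXPZX : (Xmat Y1 Z1)^T *m projmx (Zmat Z1 Z2) *m Xmat Y1 Z1 \in unitmx.
Hypothesis hXV : gram_unit (XV Y1 Z1 Z2).

Local Notation Z := (Zmat Z1 Z2).
Local Notation X := (Xmat Y1 Z1).
Local Notation V := (Vhat Y1 Z1 Z2).
Local Notation PZ := (projmx Z).
Local Notation MZ := (annmx Z).
Local Notation P1 := (projmx Z1).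
Local Notation W := (annmx Z1).

Lemma hZ1 : gram_unit Z1.
Proof.
apply: ker_unit => v /gram_ker2 h.
have : Z *m col_mx v 0 = 0 by rewrite /Zmat mul_row_col h mulmx0 addr0.
by move/(gram_ker hZ)/(congr1 usubmx); rewrite col_mxKu => ->; apply/matrixP=> i j; rewrite !mxE.
Qed.

Lemma Z1_eq : Z1 = Z *m col_mx 1%:M 0.
Proof. by rewrite /Zmat mul_row_col mulmx1 mulmx0 addr0. Qed.

Lemma PZ_Z1 : PZ *m Z1 = Z1.
Proof.
by rewrite [X in PZ *m X = _]Z1_eq mulmxA projmx_A // -Z1_eq.
Qed.

Lemma PZ_P1 : PZ *m P1 = P1.
Proof.
have e : P1 = Z1 *m (invmx (Z1^T *m Z1) *m Z1^T) by rewrite /projmx mulmxA.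
by rewrite [in LHS]e mulmxA PZ_Z1 -e.
Qed.

Lemma P1_PZ : P1 *m PZ = P1.
Proof.
by rewrite -(projmx_tr Z1) -(projmx_tr Z) -trmx_mul PZ_P1.
Qed.

Lemma P1_Z1 : P1 *m Z1 = Z1.
Proof. exact: projmx_A hZ1. Qed.

Lemma Q_Z1 : (PZ - P1) *m Z1 = 0.
Proof. by rewrite mulmxBl PZ_Z1 P1_Z1 subrr. Qed.

Lemma PZ_W : PZ *m W = PZ - P1.
Proof. by rewrite /annmx mulmxBr mulmx1 PZ_P1. Qed.

Lemma W_PZ : W *m PZ = PZ - P1.
Proof. by rewrite /annmx mulmxBl mul1mx P1_PZ. Qed.

Lemma MZ_W : MZ *m W = MZ.
Proof.
rewrite {2}/annmx mulmxBr mulmx1 /annmx mulmxBl mul1mx PZ_P1 subrr subr0.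
by [].
Qed.

Lemma W_MZ : W *m MZ = MZ.
Proof.
by rewrite -(annmx_tr Z1) -(annmx_tr Z) -trmx_mul MZ_W.
Qed.

Lemma W_dec : W = (PZ - P1) + MZ.
Proof. by rewrite /annmx [RHS]addrC addrA subrK. Qed.

Lemma MZ_Z1 : MZ *m Z1 = 0.
Proof. by rewrite /annmx mulmxBl mul1mx PZ_Z1 subrr. Qed.

Lemma Q_tr : (PZ - P1)^T = PZ - P1.
Proof. by rewrite trB (projmx_tr Z) (projmx_tr Z1). Qed.

Lemma W_V : W *m V = V.
Proof. by rewrite /Vhat mulmxA W_MZ. Qed.

Lemma VT : V^T = Y1^T *m MZ.
Proof. by rewrite /Vhat trmx_mul (annmx_tr Z). Qed.

Lemma Z1T_V : Z1^T *m V = 0.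
Proof.
by rewrite /Vhat mulmxA -(annmx_tr Z) -trmx_mul MZ_Z1 trmx0 mul0mx.
Qed.


Local Notation Yh := (Y1hat Y1 Z1 Z2).
Local Notation A := (Yh^T *m W *m Yh).
Local Notation B := (Y1^T *m W *m Y1).
Local Notation E := (V^T *m V).

Lemma A_eq : A = Y1^T *m (PZ - P1) *m Y1.
Proof.
rewrite /Y1hat; apply: A_eq_gen.
- exact: projmx_tr.
- exact: PZ_W.
- by rewrite mulmxBl (projmx_idem hZ) P1_PZ.
Qed.

Lemma E_eq : E = Y1^T *m MZ *m Y1.
Proof. by rewrite (annmx_quad hZ). Qed.

Lemma B_eq : B = A + E.
Proof. by rewrite A_eq E_eq {1}W_dec mulmxDr mulmxDl. Qed.

Lemma A_tr : A^T = A.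
Proof. by rewrite tr_sym_quad (annmx_tr Z1). Qed.
Lemma B_tr : B^T = B.
Proof. by rewrite tr_sym_quad (annmx_tr Z1). Qed.
Lemma E_tr : E^T = E.
Proof. by rewrite trmx_mul trmxK. Qed.

Lemma quad_W m (u : 'M[R]_(n, m)) (x : 'cV_m) :
  x^T *m (u^T *m W *m u) *m x = (W *m (u *m x))^T *m (W *m (u *m x)).
Proof.
rewrite -(annmx_quad hZ1) trmx_mul !mulmxA.
by [].
Qed.

Lemma A_psd (x : 'cV[R]_k1) : 0 <= (x^T *m A *m x) 0 0.
Proof. by rewrite quad_W sq_ge0. Qed.
Lemma B_psd (x : 'cV[R]_k1) : 0 <= (x^T *m B *m x) 0 0.
Proof. by rewrite quad_W sq_ge0. Qed.
Lemma E_psd (x : 'cV[R]_k1) : 0 <= (x^T *m E *m x) 0 0.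
Proof. exact: psd_gram. Qed.

Lemma P1_eq m (u : 'M[R]_(n, m)) : P1 *m u = Z1 *m (invmx (Z1^T *m Z1) *m Z1^T *m u).
Proof. by rewrite /projmx !mulmxA. Qed.

Lemma W0 m (u : 'M[R]_(n, m)) : W *m u = 0 -> u = Z1 *m (invmx (Z1^T *m Z1) *m Z1^T *m u).
Proof. by rewrite /annmx mulmxBl mul1mx => /eqP; rewrite subr_eq0 => /eqP {1}->; rewrite P1_eq. Qed.

Lemma quad0 m (M : 'M[R]_m) (v : 'cV_m) : M *m v = 0 -> v^T *m M *m v = 0.
Proof. by move=> h; rewrite -mulmxA h mulmx0. Qed.

Lemma A_unit : A \in unitmx.
Proof.
apply: ker_unit => v /quad0; rewrite quad_W => /(congr1 (fun M : 'M[R]_1 => M 0 0)).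
rewrite [RHS]mxE => /sq_eq0 /W0; set g := invmx _ *m _ *m _ => hg.
have ht : X^T *m PZ *m X *m col_mx v (- g) = 0.
  rewrite -mulmxA /Xmat mul_row_col mulmxN -mulmxA.
  have -> : PZ *m (Y1 *m v - Z1 *m g) = 0.
    by rewrite mulmxBr (mulmxA PZ Y1) (mulmxA PZ Z1) PZ_Z1 -hg subrr.
  by rewrite mulmx0.
have := congr1 usubmx (etrans (esym (mulKmx hXPZX (col_mx v (- g)))) (etrans (congr1 (mulmx _) ht) (mulmx0 _ _))).
by rewrite col_mxKu => ->; apply/matrixP => i j; rewrite !mxE.
Qed.

Lemma B_unit : B \in unitmx.
Proof.
apply: ker_unit => v /quad0; rewrite quad_W => /(congr1 (fun M : 'M[R]_1 => M 0 0)).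
rewrite [RHS]mxE => /sq_eq0 /W0; set g := invmx _ *m _ *m _ => hg.
have ht : X *m col_mx v (- g) = 0.
  by rewrite /Xmat mul_row_col mulmxN hg subrr.
move/(gram_ker hX)/(congr1 usubmx): ht.
by rewrite col_mxKu => ->; apply/matrixP => i j; rewrite !mxE.
Qed.

Local Notation bo := (beta_ols Y1 y Z1).
Local Notation b2 := (beta_2sls Y1 y Z1 Z2).
Local Notation Q := (PZ - P1).

Lemma O_eq : B *m bo = Y1^T *m W *m y.
Proof.
have h : X^T *m (y - X *m theta_ols Y1 y Z1) = 0 := ols_normal y hX.
move: h; rewrite /Xmat XT_col => /col0 [h1 h2].
apply: (fwl (Zm := Z1) (g := dsubmx (theta_ols Y1 y Z1))).
  exact: (annmx_A hZ1).
rewrite -row_th -mulmxA (annmx_orth h2); exact: h1.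
Qed.

Lemma T_eq : A *m b2 = Y1^T *m Q *m y.
Proof.
have h : X^T *m PZ *m (y - X *m theta_2sls Y1 y Z1 Z2) = 0 := iv_normal y hXPZX.
move: h; rewrite -mulmxA /Xmat XT_col => /col0 [h1 h2].
have h3 : Z1^T *m (y - X *m theta_2sls Y1 y Z1 Z2) = 0.
  by rewrite -h2 mulmxA -(projmx_tr Z) -trmx_mul PZ_Z1.
rewrite A_eq; apply: (fwl (Zm := Z1) (g := dsubmx (theta_2sls Y1 y Z1 Z2))).
  exact: Q_Z1.
rewrite -row_th -PZ_W (mulmxA Y1^T PZ W) -(mulmxA (Y1^T *m PZ) W) (annmx_orth h3).
rewrite -(mulmxA Y1^T PZ); exact: h1.
Qed.

Local Notation rho := (rho_cf Y1 y Z1 Z2).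
Local Notation thc := (theta_cf Y1 y Z1 Z2).
Local Notation bc := (usubmx (theta_cf Y1 y Z1 Z2)).
Local Notation gc := (dsubmx (theta_cf Y1 y Z1 Z2)).

Lemma VT_Z1 : V^T *m Z1 = 0.
Proof. by have := congr1 trmx Z1T_V; rewrite trmx_mul trmxK trmx0. Qed.

Lemma VT_Y1 : V^T *m Y1 = E.
Proof. by rewrite E_eq VT. Qed.

Lemma Y1T_V : Y1^T *m V = E.
Proof. by rewrite E_eq /Vhat mulmxA. Qed.

Lemma CF_res : y - XV Y1 Z1 Z2 *m coef_cf Y1 y Z1 Z2 = (y - V *m rho) - (Y1 *m bc + Z1 *m gc).
Proof.
rewrite /XV row_th /Xmat row_th -/(theta_cf Y1 y Z1 Z2) -/(rho_cf Y1 y Z1 Z2).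
by rewrite [_ + V *m _]addrC opprD addrA.
Qed.

Lemma CF_eqs : B *m bc + E *m rho = Y1^T *m W *m y /\ E *m bc + E *m rho = V^T *m y.
Proof.
have h : (XV Y1 Z1 Z2)^T *m (y - XV Y1 Z1 Z2 *m coef_cf Y1 y Z1 Z2) = 0 := ols_normal y hXV.
move: h; rewrite {1}/XV XT_col => /col0 [hx hv].
move: hx; rewrite {1}/Xmat XT_col => /col0 [hy hz].
rewrite CF_res in hy hz hv; split.
  have := fwl (Y := Y1) (Zm := Z1) (Wm := W) (y := y - V *m rho) (bb := bc) (g := gc) (annmx_A hZ1).
  rewrite -mulmxA (annmx_orth hz) => /(_ hy).
  rewrite (mulmxBr (Y1^T *m W) y) (mulmxA (Y1^T *m W) V) -(mulmxA Y1^T W V) W_V Y1T_V => ->.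
  by rewrite subrK.
move: hv; rewrite !(mulmxBr V^T) (mulmxDr V^T).
rewrite (mulmxA V^T Z1) VT_Z1 mul0mx addr0 (mulmxA V^T Y1) VT_Y1 (mulmxA V^T V).
move/eqP; rewrite subr_eq0 => /eqP e.
by rewrite -e subrK.
Qed.

Lemma bc_eq : bc = b2.
Proof.
have [c1 c2] := CF_eqs.
have e1 : B *m bc = Y1^T *m W *m y - E *m rho by rewrite -c1 addrK.
have e2 : E *m bc = V^T *m y - E *m rho by rewrite -c2 addrK.
have eA : A = B - E by rewrite B_eq addrK.
have hA : A *m bc = Y1^T *m Q *m y.
  rewrite eA mulmxBl e1 e2 opprB addrA subrK VT {1}W_dec.
  by rewrite mulmxDr mulmxDl addrK.
rewrite -(mulKmx A_unit bc) -(mulKmx A_unit b2) hA T_eq.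
by [].
Qed.

Lemma K_eq : B *m (bo - b2) = E *m rho.
Proof.
have [c1 _] := CF_eqs.
by rewrite mulmxBr O_eq -bc_eq -c1 addrC addKr.
Qed.

Local Notation G := (V^T *m annmx X *m V).
Local Notation d := (bo - b2).

Lemma w_eq : usubmx (invmx (X^T *m X) *m (X^T *m (V *m rho))) = d.
Proof.
set w := invmx (X^T *m X) *m _.
have hw : X^T *m (X *m w) = X^T *m (V *m rho).
  by rewrite /w (mulmxA X^T X) (mulmxA (X^T *m X)) (mulmxV hX) mul1mx.
have hu : X^T *m (V *m rho) = col_mx (E *m rho) 0.
  by rewrite {1}/Xmat XT_col (mulmxA Y1^T V rho) (mulmxA Z1^T V rho) Y1T_V Z1T_V mul0mx.
move: hw; rewrite hu {1}/Xmat XT_col => /eq_col_mx [h1 h2].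
have e : B *m usubmx w = B *m d.
  rewrite K_eq -h1 -(annmx_orth h2) /Xmat row_th mulmxDr.
  rewrite (mulmxA W Z1) (annmx_A hZ1) mul0mx addr0 !mulmxA.
  by [].
by rewrite -(mulKmx B_unit (usubmx w)) e mulKmx // B_unit.
Qed.

Lemma G_quad : rho^T *m G *m rho = rho^T *m E *m rho - rho^T *m E *m d.
Proof.
rewrite /annmx (mulmxBr V^T) mulmx1 (mulmxBl V^T (V^T *m projmx X) V) (mulmxBr rho^T) (mulmxBl (rho^T *m E)).
congr (_ - _).
rewrite /projmx assoc5.
set u := X^T *m (V *m rho).
have hu : u = col_mx (E *m rho) 0.
  by rewrite /u {1}/Xmat XT_col (mulmxA Y1^T V rho) (mulmxA Z1^T V rho) Y1T_V Z1T_V mul0mx.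
rewrite -{1}(vsubmxK (invmx (X^T *m X) *m u)) w_eq {1}hu tr_col_mx mul_row_col.
by rewrite trmx0 mul0mx addr0 trmx_mul E_tr mulmxA.
Qed.

Lemma G_unit : G \in unitmx.
Proof.
apply: ker_unit => v /quad0; rewrite (quad_ann _ _ hX) => /(congr1 (fun M : 'M[R]_1 => M 0 0)).
rewrite [RHS]mxE => /sq_eq0 /ann0; set h := invmx _ *m _ *m _ => hh.
have ht : XV Y1 Z1 Z2 *m col_mx (- h) v = 0.
  by rewrite /XV mul_row_col mulmxN -hh addrC subrr.
move/(gram_ker hXV)/(congr1 dsubmx): ht.
by rewrite col_mxKd => ->; apply/matrixP => i j; rewrite !mxE.
Qed.

Local Notation C := (invmx A - invmx B).

Lemma C_Arho : C *m (A *m rho) = d.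
Proof.
rewrite mulmxBl (mulmxA (invmx A)) (mulVmx A_unit) mul1mx.
have eA : A = B - E by rewrite B_eq addrK.
rewrite [X in invmx B *m (X *m rho)]eA mulmxBl mulmxBr (mulmxA (invmx B) B) (mulVmx B_unit) mul1mx.
by rewrite -K_eq (mulmxA (invmx B) B) (mulVmx B_unit) mul1mx opprB addrC subrK.
Qed.

Local Notation q := ((rho^T *m G *m rho) 0 0).

Lemma q_ge0 : 0 <= q.
Proof. by rewrite (quad_ann _ _ hX) sq_ge0. Qed.

Lemma qform_scale k (v : 'cV[R]_k) (M : 'M[R]_k) a : qform v (a *: M) = a * qform v M.
Proof. by rewrite /qform -scalemxAr -scalemxAl entZ. Qed.

Lemma dAr : (d^T *m (A *m rho)) 0 0 = q.
Proof.
have eA : A = B - E by rewrite B_eq addrK.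
rewrite G_quad entB eA mulmxBl mulmxBr entB.
congr (_ - _).
  rewrite mulmxA -[d^T *m B]trmxK trmx_mul trmxK B_tr K_eq trmx_mul E_tr.
  by [].
by rewrite (tr11 d (E *m rho)) trmx_mul E_tr mulmxA.
Qed.

Lemma tH_ss (s : R) : 0 < s -> Hmid Y1 Z1 Z2 s s \in unitmx -> tH Y1 y Z1 Z2 s s = s^-1 * q.
Proof.
move=> hs hu.
have eH : Hmid Y1 Z1 Z2 s s = s *: C by rewrite /Hmid scalerBr.
have su : s \is a GRing.unit by rewrite unitfE gt_eqF.
have Cu : C \in unitmx by rewrite -(unitmxZ _ su) -eH.
rewrite /tH eH invmxZ -?eH // qform_scale; congr (_ * _).
rewrite /qform -mulmxA -[X in invmx C *m X]C_Arho (mulKmx Cu).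
exact: dAr.
Qed.

Lemma tCF_eq : 0 < sigma2_u Y1 y Z1 Z2 -> tCF Y1 y Z1 Z2 = (sigma2_u Y1 y Z1 Z2)^-1 * q.
Proof.
move=> hs.
have su : sigma2_u Y1 y Z1 Z2 \is a GRing.unit by rewrite unitfE gt_eqF.
rewrite /tCF invmxZ ?invmxK ?qform_scale //.
by rewrite (unitmxZ _ su) unitmx_inv G_unit.
Qed.

Lemma Hmid_sym s1 s2 : (Hmid Y1 Z1 Z2 s1 s2)^T = Hmid Y1 Z1 Z2 s1 s2.
Proof. by rewrite /Hmid trB !trZ !inv_sym // ?A_tr ?B_tr. Qed.

Lemma tH3_le (s2 so : R) : 0 < so -> so <= s2 ->
  Hmid Y1 Z1 Z2 s2 s2 \in unitmx -> Hmid Y1 Z1 Z2 s2 so \in unitmx ->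
  tH Y1 y Z1 Z2 s2 so <= tH Y1 y Z1 Z2 s2 s2.
Proof.
move=> hso hle u2 u3.
apply: (inv_anti (P := (s2 - so) *: invmx B)).
- exact: Hmid_sym.
- exact: Hmid_sym.
- exact: u2.
- exact: u3.
- by rewrite /Hmid scalerBl [RHS]addrA subrK.
- move=> x; rewrite -scalemxAr -scalemxAl entZ mulr_ge0 ?subr_ge0 //.
  exact: (inv_psd B_tr B_unit B_psd).
- move=> x; rewrite /Hmid mulmxBr mulmxBl entB -!scalemxAr -!scalemxAl !entZ -mulrBr.
  rewrite mulr_ge0 ?subr_ge0; first by [].
    exact: (le_trans (ltW hso) hle).
  apply: (inv_anti (P := E)) => //.
  + exact: A_tr.
  + exact: B_tr.
  + exact: A_unit.
  + exact: B_unit.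
  + exact: B_eq.
  + exact: E_psd.
  + exact: A_psd.
Qed.

Lemma sig1 : sigma2_ols Y1 y Z1 <= sigma2_2sls Y1 y Z1 Z2.
Proof.
rewrite /sigma2_ols /sigma2_2sls; apply: ler_wpM2l; first by rewrite invr_ge0 ler0n.
set t2 := theta_2sls _ _ _ _; set to := theta_ols _ _ _.
have -> : y - X *m t2 = (y - X *m to) + X *m (to - t2).
  by rewrite mulmxBr addrA subrK.
apply: min_res; exact: (ols_normal y hX).
Qed.

Lemma sig2 : sigma2_u Y1 y Z1 Z2 <= sigma2_ols Y1 y Z1.
Proof.
rewrite /sigma2_ols /sigma2_u; apply: ler_wpM2l; first by rewrite invr_ge0 ler0n.
set to := theta_ols _ _ _.
have -> : y - X *m theta_cf Y1 y Z1 Z2 - V *m rho_cf Y1 y Z1 Z2 = y - XV Y1 Z1 Z2 *m coef_cf Y1 y Z1 Z2.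
  by rewrite /XV row_th opprD addrA.
have -> : y - X *m to = (y - XV Y1 Z1 Z2 *m coef_cf Y1 y Z1 Z2) + XV Y1 Z1 Z2 *m (coef_cf Y1 y Z1 Z2 - col_mx to 0).
  by rewrite mulmxBr addrA subrK /XV mul_row_col mulmx0 addr0.
apply: min_res; exact: (ols_normal y hXV).
Qed.

Lemma main_sec
  (hsu : 0 < sigma2_u Y1 y Z1 Z2)
  (hsols : 0 < sigma2_ols Y1 y Z1)
  (hs2sls : 0 < sigma2_2sls Y1 y Z1 Z2)
  (hH1 : Hmid Y1 Z1 Z2 (sigma2_ols Y1 y Z1) (sigma2_ols Y1 y Z1) \in unitmx)
  (hH2 : Hmid Y1 Z1 Z2 (sigma2_2sls Y1 y Z1 Z2) (sigma2_2sls Y1 y Z1 Z2) \in unitmx)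
  (hH3 : Hmid Y1 Z1 Z2 (sigma2_2sls Y1 y Z1 Z2) (sigma2_ols Y1 y Z1) \in unitmx) :
  sigma2_ols Y1 y Z1 <= sigma2_2sls Y1 y Z1 Z2 /\
  sigma2_u Y1 y Z1 Z2 <= sigma2_ols Y1 y Z1 /\
  tH1 Y1 y Z1 Z2 <= tCF Y1 y Z1 Z2 /\
  tH2 Y1 y Z1 Z2 <= tH1 Y1 y Z1 Z2 /\
  tH3 Y1 y Z1 Z2 <= tH2 Y1 y Z1 Z2.
Proof.
have s1 := sig1; have s2 := sig2.
split; first exact: s1.
split; first exact: s2.
rewrite /tH1 /tH2 /tH3 (tH_ss hsols hH1) (tH_ss hs2sls hH2) (tCF_eq hsu).
split; first by apply: ler_wpM2r; [exact: q_ge0 | rewrite lef_pV2 ?posrE].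
split; first by apply: ler_wpM2r; [exact: q_ge0 | rewrite lef_pV2 ?posrE].
rewrite -(tH_ss hs2sls hH2); exact: tH3_le.
Qed.

End Main.

Theorem mainTheorem4 (R : realFieldType) (n k1 p1 p2 : nat)
  (Y1 : 'M[R]_(n, k1)) (Y2 : 'cV[R]_n) (Z1 : 'M[R]_(n, p1)) (Z2 : 'M[R]_(n, p2))
  (hZ : gram_unit (Zmat Z1 Z2))
  (hX : gram_unit (Xmat Y1 Z1))
  (hXPZX : (Xmat Y1 Z1)^T *m projmx (Zmat Z1 Z2) *m Xmat Y1 Z1 \in unitmx)
  (hXV : gram_unit (XV Y1 Z1 Z2))
  (hsu : 0 < sigma2_u Y1 Y2 Z1 Z2)
  (hsols : 0 < sigma2_ols Y1 Y2 Z1)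
  (hs2sls : 0 < sigma2_2sls Y1 Y2 Z1 Z2)
  (hH1 : Hmid Y1 Z1 Z2 (sigma2_ols Y1 Y2 Z1) (sigma2_ols Y1 Y2 Z1) \in unitmx)
  (hH2 : Hmid Y1 Z1 Z2 (sigma2_2sls Y1 Y2 Z1 Z2) (sigma2_2sls Y1 Y2 Z1 Z2) \in unitmx)
  (hH3 : Hmid Y1 Z1 Z2 (sigma2_2sls Y1 Y2 Z1 Z2) (sigma2_ols Y1 Y2 Z1) \in unitmx) :
  sigma2_ols Y1 Y2 Z1 <= sigma2_2sls Y1 Y2 Z1 Z2 /\
  sigma2_u Y1 Y2 Z1 Z2 <= sigma2_ols Y1 Y2 Z1 /\
  tH1 Y1 Y2 Z1 Z2 <= tCF Y1 Y2 Z1 Z2 /\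
  tH2 Y1 Y2 Z1 Z2 <= tH1 Y1 Y2 Z1 Z2 /\
  tH3 Y1 Y2 Z1 Z2 <= tH2 Y1 Y2 Z1 Z2.
Proof. exact: main_sec. Qed.
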